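(* Let $M_0>0$, $M>M_0$, let $r=r(M_0,M)>0$ be as in the local existence theorem, and let $(A,\tau)$ be the solution on $[0,r]$ of system (1.1) with initial distribution $(\varphi,\tau_0)\in\mathrm{Lip}_\alpha\times C_+(\Omega)$ satisfying $\|\varphi\|_{\mathrm{Lip}_\alpha}+\|\tau_0\|_\infty\le M_0$ (so that $\|A(t,\cdot)\|_\infty\le M$ on $[0,r]$). Then $A_t\in\mathrm{Lip}_\alpha$ for every $t\in[0,r]$, and there exists a constant $\widehat M>M$, depending only on $M_0$, $M$, $\alpha$ and the data $F,f$ (through the bound $\tau_{\max}$ on the delay), such that $\|A_t\|_{\mathrm{Lip}_\alpha}\le\widehat M$ for all $t\in[0,r]$.
   Context: $\Omega\subset\mathbb R^n$ compact, $C(\Omega)$ with sup norm, $\alpha\ge0$ fixed. Standing assumption: $F:C(\Omega)\times C(\Omega)\times C(\Omega^2)\to C(\Omega)$ is Lipschitz on bounded sets; $f:C(\Omega)\to C(\Omega)$ is Lipschitz, $0<f(\phi)(x)\le M_f$ for a constant $M_f$, non-increasing for the pointwise order. $\mathrm{Lip}_\alpha$: $\phi\in C((-\infty,0],C(\Omega))$ with $\theta\mapsto e^{-\alpha|\theta|}\phi(\theta)$ bounded and Lipschitz, norm = sup norm + Lipschitz seminorm of that map. $A_t(\theta):=A(t+\theta)$, $\theta\le0$. Local existence theorem: for $M>M_0>0$ there is $r(M_0,M)>0$ such that for every such initial distribution, (1.1) has a unique solution on $[0,r]$, namely continuous $A:(-\infty,r]\to C(\Omega)$, $\tau:[0,r]\to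 C_+(\Omega)$ with $A=\varphi$ on $(-\infty,0]$, $A(t,x)=\varphi(0,x)+\int_0^tF(A(l,\cdot),\tau(l,\cdot),A(l-\tau(l)))(x)dl$ (with $A(l-\tau(l))(x,y)=A(l-\tau(l,x),y)$) and $\int_{t-\tau(t,x)}^tf(A(s,\cdot))(x)ds=\int_{-\tau_0(x)}^0f(\varphi(s,\cdot))(x)ds$, and $\|A(t,\cdot)\|_\infty\le M$ on $[0,r]$. *)

(* Defs.v *)
From Stdlib Require Import Reals.
From Stdlib Require Vectors.Fin.
Open Scope R_scope.

(** Points of R^n : functions Fin.t n -> R. The topology is that of the
    max-norm (equivalent to the Euclidean one). *)
Definition Pt (n : nat) : Type := Fin.t n -> R.

(** Sequential compactness of a subset of R^n (coordinatewise = norm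
    convergence in R^n). *)
Definition compact_set (n : nat) (Om : Pt n -> Prop) : Prop :=
  forall u : nat -> Pt n, (forall k, Om (u k)) ->
  exists (sub : nat -> nat) (p : Pt n),
    (forall k, (sub k < sub (S k))%nat) /\ Om p /\
    forall i, Un_cv (fun k => u (sub k) i) (p i).

Section Defs.
Context {n : nat} {Om : Pt n -> Prop}.

Definition OmT : Type := { x : Pt n | Om x }.

Definition pdist_lt (x y : OmT) (d : R) : Prop :=
  forall i, Rabs (proj1_sig x i - proj1_sig y i) < d.

Definition contO (u : OmT -> R) : Prop :=
  forall x : OmT, forall eps, 0 < eps -> exists del, 0 < del /\
    forall y : OmT, pdist_lt x y del -> Rabs (u x - u y) < eps.

Definition contO2 (w : OmT -> OmT -> R) : Prop :=
  forall x1 x2 : OmT, forall eps, 0 < eps -> exists del, 0 < del /\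
    forall y1 y2 : OmT, pdist_lt x1 y1 del -> pdist_lt x2 y2 del ->
      Rabs (w x1 x2 - w y1 y2) < eps.

Definition supn_le (u : OmT -> R) (K : R) : Prop := forall x, Rabs (u x) <= K.
Definition supn2_le (w : OmT -> OmT -> R) (K : R) : Prop :=
  forall x y, Rabs (w x y) <= K.

Definition F_hyp (F : (OmT -> R) -> (OmT -> R) -> (OmT -> OmT -> R) -> (OmT -> R)) : Prop :=
  (forall u v w, contO u -> contO v -> contO2 w -> contO (F u v w)) /\
  (forall K, exists L, forall u1 v1 w1 u2 v2 w2,
     contO u1 -> contO v1 -> contO2 w1 -> contO u2 -> contO v2 -> contO2 w2 ->
     supn_le u1 K -> supn_le v1 K -> supn2_le w1 K ->
     supn_le u2 K -> supn_le v2 K -> supn2_le w2 K ->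
     forall d1 d2 d3,
       supn_le (fun x => u1 x - u2 x) d1 ->
       supn_le (fun x => v1 x - v2 x) d2 ->
       supn2_le (fun x y => w1 x y - w2 x y) d3 ->
       supn_le (fun x => F u1 v1 w1 x - F u2 v2 w2 x) (L * (d1 + d2 + d3))).

Definition f_hyp (f : (OmT -> R) -> (OmT -> R)) (Mf : R) : Prop :=
  (forall u, contO u -> contO (f u)) /\
  (exists Lf, forall u v, contO u -> contO v -> forall d,
      supn_le (fun x => u x - v x) d ->
      supn_le (fun x => f u x - f v x) (Lf * d)) /\
  (forall u, contO u -> forall x, 0 < f u x <= Mf) /\
  (forall u v, contO u -> contO v -> (forall x, u x <= v x) ->
      forall x, f v x <= f u x).

Definition cont_path (A : R -> OmT -> R) (D : R -> Prop) : Prop :=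
  forall t, D t -> forall eps, 0 < eps -> exists del, 0 < del /\
    forall s, D s -> Rabs (s - t) < del -> forall x, Rabs (A s x - A t x) <= eps.

Definition in_Lip (alpha : R) (phi : R -> OmT -> R) : Prop :=
  (forall th, th <= 0 -> contO (phi th)) /\
  cont_path phi (fun th => th <= 0) /\
  (exists a, forall th, th <= 0 -> forall x, Rabs (exp (- alpha * Rabs th) * phi th x) <= a) /\
  (exists b, forall th1 th2, th1 <= 0 -> th2 <= 0 -> forall x,
      Rabs (exp (- alpha * Rabs th1) * phi th1 x - exp (- alpha * Rabs th2) * phi th2 x)
        <= b * Rabs (th1 - th2)).

Definition lip_norm_le (alpha : R) (phi : R -> OmT -> R) (K : R) : Prop :=
  exists a b, a + b <= K /\
  (forall th, th <= 0 -> forall x, Rabs (exp (- alpha * Rabs th) * phi th x) <= a) /\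
  (forall th1 th2, th1 <= 0 -> th2 <= 0 -> forall x,
      Rabs (exp (- alpha * Rabs th1) * phi th1 x - exp (- alpha * Rabs th2) * phi th2 x)
        <= b * Rabs (th1 - th2)).

Definition init_ok (alpha M0 : R) (phi : R -> OmT -> R) (tau0 : OmT -> R) : Prop :=
  in_Lip alpha phi /\ contO tau0 /\ (forall x, 0 <= tau0 x) /\
  exists K c, lip_norm_le alpha phi K /\ supn_le tau0 c /\ K + c <= M0.

Definition is_solution
    (F : (OmT -> R) -> (OmT -> R) -> (OmT -> OmT -> R) -> (OmT -> R))
    (f : (OmT -> R) -> (OmT -> R)) (r : R)
    (phi : R -> OmT -> R) (tau0 : OmT -> R)
    (A : R -> OmT -> R) (tau : R -> OmT -> R) : Prop :=
  (forall t, t <= r -> contO (A t)) /\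
  cont_path A (fun t => t <= r) /\
  (forall t, 0 <= t <= r -> contO (tau t) /\ forall x, 0 <= tau t x) /\
  cont_path tau (fun t => 0 <= t <= r) /\
  (forall t, t <= 0 -> forall x, A t x = phi t x) /\
  (forall t, 0 <= t <= r -> forall x,
     exists pr : Riemann_integrable
        (fun l => F (A l) (tau l) (fun y z => A (l - tau l y) z) x) 0 t,
       A t x = phi 0 x + RiemannInt pr) /\
  (forall t, 0 <= t <= r -> forall x,
     exists (pr1 : Riemann_integrable (fun s => f (A s) x) (t - tau t x) t)
            (pr2 : Riemann_integrable (fun s => f (phi s) x) (- tau0 x) 0),
       RiemannInt pr1 = RiemannInt pr2).

(** r is a time as provided by the local existence theorem for (M0, M):
    for every admissible initial distribution there is a unique solution
    on [0,r], and it satisfies ||A(t)||_oo <= M on [0,r]. *)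
Definition local_existence_time F f (alpha M0 M r : R) : Prop :=
  0 < r /\
  forall phi tau0, init_ok alpha M0 phi tau0 ->
    (exists A tau, is_solution F f r phi tau0 A tau /\
        forall t, 0 <= t <= r -> supn_le (A t) M) /\
    (forall A1 tau1 A2 tau2,
        is_solution F f r phi tau0 A1 tau1 -> is_solution F f r phi tau0 A2 tau2 ->
        (forall t, t <= r -> forall x, A1 t x = A2 t x) /\
        (forall t, 0 <= t <= r -> forall x, tau1 t x = tau2 t x)).

Definition hist (A : R -> OmT -> R) (t : R) : R -> OmT -> R := fun th => A (t + th).

End Defs.
Arguments OmT {n} Om.

(* Main.v *)
Require Import Defs.
From Stdlib Require Import Reals Lra Lia ZArith ClassicalEpsilon Classical FunctionalExtensionality.
Open Scope R_scope.

Lemma fin_uniform (n : nat) (h : Fin.t n -> nat -> Prop) :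
  (forall i, exists N, forall k, (N <= k)%nat -> h i k) ->
  exists N, forall i k, (N <= k)%nat -> h i k.
Proof.
  revert h; induction n as [|n IH]; intros h H.
  - exists 0%nat. intros i. apply (Fin.case0 (fun i => forall k, _ -> h i k) i).
  - destruct (H Fin.F1) as [N0 HN0].
    destruct (IH (fun i => h (Fin.FS i)) (fun i => H (Fin.FS i))) as [N1 HN1].
    exists (Nat.max N0 N1). intros i.
    apply (Fin.caseS' i (fun i => forall k, _ -> h i k)).
    + intros k Hk; apply HN0; lia.
    + intros j k Hk; apply (HN1 j); lia.
Qed.

Lemma sub_ge (sub : nat -> nat) : (forall k, (sub k < sub (S k))%nat) -> forall k, (k <= sub k)%nat.
Proof. intros H k; induction k; [lia|]. specialize (H k); lia. Qed.

Lemma cont_bounded (n : nat) (Om : Pt n -> Prop) (HOm : compact_set n Om)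
  (g : OmT Om -> R) : contO g -> exists G, forall x, Rabs (g x) <= G.
Proof.
  intros Hg. apply NNPP; intros Hn.
  assert (Hk : forall k : nat, exists x, INR k < Rabs (g x)).
  { intros k. apply NNPP; intros Hk0. apply Hn. exists (INR k). intros x.
    apply Rnot_lt_le; intros Hx; apply Hk0; eauto. }
  pose (u := fun k => proj1_sig (constructive_indefinite_description _ (Hk k))).
  assert (Hu : forall k, INR k < Rabs (g (u k))).
  { intros k; unfold u; destruct (constructive_indefinite_description _ (Hk k)); auto. }
  destruct (HOm (fun k => proj1_sig (u k)) (fun k => proj2_sig (u k))) as [sub [p [Hsub [Hp Hcv]]]].
  pose (xp := exist Om p Hp : OmT Om).
  destruct (Hg xp 1 Rlt_0_1) as [del [Hdel Hd]].
  destruct (fin_uniform n (fun i k => Rabs (proj1_sig (u (sub k)) i - p i) < del)) as [N HN].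
  { intros i. destruct (Hcv i del Hdel) as [N HN]. exists N. intros k Hk2.
    specialize (HN k Hk2). unfold R_dist in HN. exact HN. }
  destruct (archimed (Rabs (g xp) + 1)) as [Har _].
  set (k := Nat.max N (Z.to_nat (up (Rabs (g xp) + 1)))).
  assert (HkN : (N <= k)%nat) by (unfold k; lia).
  assert (Hd' : Rabs (g xp - g (u (sub k))) < 1).
  { apply Hd. intros i. simpl. rewrite Rabs_minus_sym. apply HN; auto. }
  assert (Hk1 : Rabs (g xp) + 1 <= INR k).
  { apply Rle_trans with (IZR (up (Rabs (g xp) + 1))); [lra|].
    assert (0 <= up (Rabs (g xp) + 1))%Z.
    { apply le_IZR. pose proof (Rabs_pos (g xp)); lra. }
    rewrite <- (Z2Nat.id (up _)) by lia. rewrite <- INR_IZR_INZ.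
    apply le_INR. unfold k; lia. }
  pose proof (Hu (sub k)). pose proof (le_INR _ _ (sub_ge sub Hsub k)).
  pose proof (Rabs_triang_inv (g (u (sub k))) (g xp)).
  rewrite Rabs_minus_sym in Hd'. lra.
Qed.

Lemma tau_bound (n : nat) (Om : Pt n -> Prop)
  (F : (OmT Om -> R) -> (OmT Om -> R) -> (OmT Om -> OmT Om -> R) -> (OmT Om -> R))
  (f : (OmT Om -> R) -> (OmT Om -> R)) (Mf : R) (Hf : f_hyp f Mf) (r : R)
  (phi : R -> OmT Om -> R) (tau0 : OmT Om -> R) (A tau : R -> OmT Om -> R)
  (Hphic : forall th, th <= 0 -> contO (phi th))
  (Hphip : cont_path phi (fun th => th <= 0))
  (Htau0 : forall x, 0 <= tau0 x)
  (Hsol : is_solution F f r phi tau0 A tau) :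
  forall l y, 0 <= l <= r -> tau l y <= l + tau0 y.
Proof.
  destruct Hf as [Hfc [[Lf HLf] [Hfpos Hfmon]]].
  destruct Hsol as [HAc [HAp [Htauc [Htaup [HAphi [HAint HAtau]]]]]].
  intros l y Hl. apply Rnot_lt_le; intros Hlt.
  destruct (Htauc l Hl) as [_ Htau_nn].
  pose proof (Htau0 y) as Ht0.
  destruct (HAtau l Hl y) as [pr1 [pr2 Heq]].
  assert (HAeq : forall s, s <= 0 -> A s = phi s).
  { intros s Hs; apply functional_extensionality; intros z; apply HAphi; auto. }
  assert (Hgpos : forall s, s <= r -> 0 < f (A s) y <= Mf).
  { intros s Hs. apply Hfpos. apply HAc; auto. }
  assert (Hal : l - tau l y <= - tau0 y <= l) by lra.
  pose (pa := RiemannInt_P22 pr1 Hal).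
  pose (pb := RiemannInt_P23 pr1 Hal).
  assert (Hbl : - tau0 y <= 0 <= l) by lra.
  pose (pc := RiemannInt_P22 pb Hbl).
  pose (pd := RiemannInt_P23 pb Hbl).
  pose proof (RiemannInt_P26 pa pb pr1) as E1.
  pose proof (RiemannInt_P26 pc pd pb) as E2.
  assert (E3 : RiemannInt pc = RiemannInt pr2).
  { apply RiemannInt_P18; [lra|]. intros s Hs. rewrite HAeq by lra. reflexivity. }
  assert (E4 : 0 <= RiemannInt pd).
  { assert (HH : 0 * (l - 0) <= RiemannInt pd).
    { apply (RiemannInt_const_bound (l:=0) (u:=Mf) pd); [lra|].
      intros s Hs. pose proof (Hgpos s ltac:(lra)); lra. }
    lra. }
  assert (E5 : 0 < RiemannInt pa).
  { set (a := l - tau l y) in *.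
    assert (Ha0 : a <= 0) by (unfold a; lra).
    pose proof (Hfpos (phi a) (Hphic a Ha0) y) as [Hv0 _].
    set (v0 := f (phi a) y) in *.
    set (eps' := v0 / (2 * (Rabs Lf + 1))).
    assert (HLf1 : 0 < Rabs Lf + 1) by (pose proof (Rabs_pos Lf); lra).
    assert (Heps : 0 < eps').
    { unfold eps'. apply Rdiv_lt_0_compat; lra. }
    assert (Heps2 : (Rabs Lf + 1) * eps' = v0 / 2) by (unfold eps'; field; lra).
    destruct (Hphip a Ha0 eps' Heps) as [del [Hdel Hd]].
    assert (Hlow : forall s, s <= 0 -> Rabs (s - a) < del -> v0 / 2 <= f (phi s) y).
    { intros s Hs Hsa.
      assert (HS : supn_le (fun x => phi s x - phi a x) eps').
      { intros x. apply Hd; auto. }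
      pose proof (HLf _ _ (Hphic s Hs) (Hphic a Ha0) eps' HS y) as HH.
      simpl in HH. pose proof (Rle_abs Lf).
      assert (Lf * eps' <= Rabs Lf * eps') by (apply Rmult_le_compat_r; lra).
      rewrite Rabs_minus_sym in HH. fold v0 in HH.
      pose proof (Rle_abs (v0 - f (phi s) y)). lra. }
    set (c := Rmin (a + del / 2) (- tau0 y)).
    assert (Hc1 : c <= a + del / 2) by apply Rmin_l.
    assert (Hc2 : c <= - tau0 y) by apply Rmin_r.
    assert (Hc3 : a < c).
    { unfold c. apply Rmin_glb_lt; [lra|]. unfold a; lra. }
    assert (Hac : a <= c <= - tau0 y) by lra.
    pose (pa1 := RiemannInt_P22 pa Hac).
    pose (pa2 := RiemannInt_P23 pa Hac).
    pose proof (RiemannInt_P26 pa1 pa2 pa) as E6.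
    assert (E7 : v0 / 2 * (c - a) <= RiemannInt pa1).
    { apply (RiemannInt_const_bound (l:=v0/2) (u:=Mf) pa1); [lra|].
      intros s Hs. split.
      - rewrite HAeq by lra. apply Hlow; [lra|]. rewrite Rabs_right; lra.
      - pose proof (Hgpos s ltac:(lra)); lra. }
    assert (E8 : 0 * (- tau0 y - c) <= RiemannInt pa2).
    { apply (RiemannInt_const_bound (l:=0) (u:=Mf) pa2); [lra|].
      intros s Hs. pose proof (Hgpos s ltac:(lra)); lra. }
    assert (0 < v0 / 2 * (c - a)) by (apply Rmult_lt_0_compat; lra).
    lra. }
  lra.
Qed.

Lemma w_cont (n : nat) (Om : Pt n -> Prop) (r : R) (A tau : R -> OmT Om -> R) (l : R)
  (HAc : forall t, t <= r -> contO (A t)) (HAp : cont_path A (fun t => t <= r))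
  (Htl : contO (tau l)) (Htnn : forall y, 0 <= tau l y) (Hl : l <= r) :
  contO2 (fun y z => A (l - tau l y) z).
Proof.
  intros y1 z1 eps Heps.
  assert (Hs1 : l - tau l y1 <= r) by (pose proof (Htnn y1); lra).
  destruct (HAp _ Hs1 (eps/2) ltac:(lra)) as [d1 [Hd1 H1]].
  destruct (Htl y1 d1 Hd1) as [d2 [Hd2 H2]].
  destruct (HAc _ Hs1 z1 (eps/2) ltac:(lra)) as [d3 [Hd3 H3]].
  exists (Rmin d2 d3). split; [apply Rmin_glb_lt; auto|].
  intros y2 z2 Hy Hz.
  assert (Hy' : pdist_lt y1 y2 d2).
  { intros i. eapply Rlt_le_trans; [apply Hy|apply Rmin_l]. }
  assert (Hz' : pdist_lt z1 z2 d3).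
  { intros i. eapply Rlt_le_trans; [apply Hz|apply Rmin_r]. }
  specialize (H2 y2 Hy'). specialize (H3 z2 Hz').
  assert (Hs2 : l - tau l y2 <= r) by (pose proof (Htnn y2); lra).
  assert (Hd : Rabs ((l - tau l y2) - (l - tau l y1)) < d1).
  { replace ((l - tau l y2) - (l - tau l y1)) with (tau l y1 - tau l y2) by ring. auto. }
  specialize (H1 _ Hs2 Hd z2).
  pose proof (Rabs_triang (A (l - tau l y1) z1 - A (l - tau l y1) z2)
                          (A (l - tau l y1) z2 - A (l - tau l y2) z2)).
  replace (A (l - tau l y1) z1 - A (l - tau l y1) z2 + (A (l - tau l y1) z2 - A (l - tau l y2) z2))
    with (A (l - tau l y1) z1 - A (l - tau l y2) z2) in H by ring.
  rewrite (Rabs_minus_sym (A (l - tau l y1) z2)) in H. lra.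
Qed.

Lemma exp_lip (alpha u v : R) : 0 <= alpha -> u <= v ->
  0 <= exp (alpha * v) - exp (alpha * u) <= alpha * (v - u) * exp (alpha * v).
Proof.
  intros Ha Huv. split.
  - assert (alpha * u <= alpha * v) by (apply Rmult_le_compat_l; lra).
    destruct (Req_dec (alpha*u) (alpha*v)) as [E|E]; [rewrite E; lra|].
    pose proof (exp_increasing (alpha*u) (alpha*v) ltac:(lra)). lra.
  - pose proof (exp_ineq1_le (- (alpha * (v - u)))) as H.
    assert (E : exp (alpha * v) * exp (- (alpha * (v - u))) = exp (alpha * u)).
    { rewrite <- exp_plus. f_equal. ring. }
    pose proof (exp_pos (alpha * v)).
    assert (exp (alpha * v) * (1 + - (alpha * (v - u))) <= exp (alpha * v) * exp (- (alpha * (v - u))))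
      by (apply Rmult_le_compat_l; lra).
    nra.
Qed.

Lemma abs_between (x c : R) : Rabs x <= c -> - c <= x <= c.
Proof. intros H. pose proof (Rle_abs x). pose proof (Rle_abs (- x)). rewrite Rabs_Ropp in H1. lra. Qed.

Lemma exp_mono (x y : R) : x <= y -> exp x <= exp y.
Proof.
  intros H. destruct (Req_dec x y) as [E|E]; [rewrite E; lra|].
  left; apply exp_increasing; lra.
Qed.

Lemma contO_const (n : nat) (Om : Pt n -> Prop) (k : R) : @contO n Om (fun _ => k).
Proof. intros x eps He. exists 1. split; [lra|]. intros y _. rewrite Rminus_diag, Rabs_R0; lra. Qed.

Lemma contO2_const (n : nat) (Om : Pt n -> Prop) (k : R) : @contO2 n Om (fun _ _ => k).
Proof. intros x1 x2 eps He. exists 1. split; [lra|]. intros y1 y2 _ _. rewrite Rminus_diag, Rabs_R0; lra. Qed.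

Theorem corollary4p5
  (n : nat) (Om : Pt n -> Prop) (HOm : compact_set n Om)
  (alpha : R) (Halpha : 0 <= alpha)
  (F : (OmT Om -> R) -> (OmT Om -> R) -> (OmT Om -> OmT Om -> R) -> (OmT Om -> R))
  (HF : F_hyp F)
  (f : (OmT Om -> R) -> (OmT Om -> R)) (Mf : R) (Hf : f_hyp f Mf)
  (M0 M : R) (HM0 : 0 < M0) (HM : M0 < M)
  (r : R) (Hr : local_existence_time F f alpha M0 M r) :
  exists Mhat, M < Mhat /\
    forall (phi : R -> OmT Om -> R) (tau0 : OmT Om -> R),
      init_ok alpha M0 phi tau0 ->
      forall (A tau : R -> OmT Om -> R),
        is_solution F f r phi tau0 A tau ->
        forall t, 0 <= t <= r ->
          in_Lip alpha (hist A t) /\ lip_norm_le alpha (hist A t) Mhat.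
Proof.
  destruct HF as [HFc HFL].
  destruct (cont_bounded n Om HOm (F (fun _ => 0) (fun _ => 0) (fun _ _ => 0))) as [G0 HG0].
  { apply HFc; [apply contO_const|apply contO_const|apply contO2_const]. }
  destruct Hr as [Hr0 Hr].
  set (E0 := exp (alpha * M0)).
  assert (HE0 : 0 < E0) by apply exp_pos.
  set (KB := M + M0 * E0 + r + M0).
  assert (HKB : 0 <= KB) by (unfold KB; pose proof (Rmult_lt_0_compat M0 E0 HM0 HE0); lra).
  destruct (HFL KB) as [L HL].
  set (C := Rabs G0 + Rabs L * (3 * KB)).
  assert (HC : 0 <= C).
  { unfold C. pose proof (Rabs_pos G0). pose proof (Rabs_pos L).
    assert (0 <= Rabs L * (3 * KB)) by (apply Rmult_le_pos; lra). lra. }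
  set (Er := exp (alpha * r)).
  assert (HEr : 0 < Er) by apply exp_pos.
  set (B := M0 + Er * (alpha * M + C)).
  assert (HB : M0 <= B).
  { unfold B. assert (0 <= alpha * M) by (apply Rmult_le_pos; lra).
    assert (0 <= Er * (alpha * M + C)) by (apply Rmult_le_pos; lra). lra. }
  exists (M + Rabs B + 1). split; [pose proof (Rabs_pos B); lra|].
  intros phi tau0 Hinit A tau Hsol t Ht.
  pose proof Hinit as Hinit0.
  destruct Hinit as [[Hphic [Hphip [_ _]]] [Htau0c [Htau0nn [K [c [[a_ [b_ [Hab [Ha_ Hb_]]]] [Hc HKc]]]]]]].
  pose proof Hsol as Hsol'.
  destruct Hsol' as [HAc [HAp [Htauc [Htaup [HAphi [HAint HAtau]]]]]].
  assert (HAM : forall s, 0 <= s <= r -> forall z, Rabs (A s z) <= M).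
  { destruct (Hr phi tau0 Hinit0) as [[A' [tau' [Hsol2 HA'M]]] Huniq].
    destruct (Huniq A tau A' tau' Hsol Hsol2) as [E _].
    intros s Hs z. rewrite E by lra. apply HA'M; auto. }
  assert (Hpt : forall z : OmT Om, 0 <= a_ <= M0 /\ 0 <= b_ <= M0 /\ 0 <= c <= M0).
  { intros z.
    pose proof (Ha_ 0 (Rle_refl 0) z). pose proof (Rabs_pos (exp (- alpha * Rabs 0) * phi 0 z)).
    pose proof (Hb_ 0 (-1) (Rle_refl 0) ltac:(lra) z).
    replace (Rabs (0 - -1)) with 1 in H1 by (rewrite Rabs_pos_eq; lra).
    pose proof (Rabs_pos (exp (- alpha * Rabs 0) * phi 0 z - exp (- alpha * Rabs (-1)) * phi (-1) z)).
    pose proof (Hc z). pose proof (Rabs_pos (tau0 z)). lra. }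
  assert (Hphib : forall s, s <= 0 -> forall z, Rabs (phi s z) <= a_ * exp (alpha * Rabs s)).
  { intros s Hs z. pose proof (Ha_ s Hs z) as H.
    rewrite Rabs_mult, (Rabs_pos_eq (exp _)) in H by (left; apply exp_pos).
    assert (E : exp (alpha * Rabs s) * exp (- alpha * Rabs s) = 1).
    { rewrite <- exp_plus. replace (alpha * Rabs s + - alpha * Rabs s) with 0 by ring. apply exp_0. }
    pose proof (exp_pos (alpha * Rabs s)).
    replace (Rabs (phi s z)) with (exp (alpha * Rabs s) * (exp (- alpha * Rabs s) * Rabs (phi s z)))
      by (rewrite <- Rmult_assoc, E; ring).
    rewrite (Rmult_comm a_). apply Rmult_le_compat_l; lra. }
  assert (Htb : forall l y, 0 <= l <= r -> 0 <= tau l y <= l + tau0 y).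
  { intros l y Hl. split; [apply (proj2 (Htauc l Hl))|].
    apply (tau_bound n Om F f Mf Hf r phi tau0 A tau Hphic Hphip Htau0nn Hsol); auto. }
  assert (Hwb : forall l y z, 0 <= l <= r -> Rabs (A (l - tau l y) z) <= KB).
  { intros l y z Hl. pose proof (Htb l y Hl). destruct (Hpt y) as [Ha1 [Hb1 Hc1]].
    pose proof (Hc y) as Hcy. pose proof (Rle_abs (tau0 y)).
    assert (0 <= M0 * E0) by (apply Rmult_le_pos; lra).
    destruct (Rle_lt_dec 0 (l - tau l y)) as [Hs|Hs].
    - pose proof (HAM (l - tau l y) ltac:(lra) z). unfold KB; lra.
    - rewrite HAphi by lra. eapply Rle_trans; [apply Hphib; lra|].
      assert (a_ * exp (alpha * Rabs (l - tau l y)) <= M0 * E0).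
      { apply Rmult_le_compat; try lra. left; apply exp_pos.
        apply exp_mono. apply Rmult_le_compat_l; auto. rewrite Rabs_left by lra. lra. }
      unfold KB; lra. }
  assert (HFb : forall l x, 0 <= l <= r ->
            Rabs (F (A l) (tau l) (fun y z => A (l - tau l y) z) x) <= C).
  { intros l x Hl. destruct (Hpt x) as [Ha1 [Hb1 Hc1]].
    destruct (Htauc l Hl) as [Htlc Htlnn].
    assert (Hw : contO2 (fun y z => A (l - tau l y) z)).
    { apply (w_cont n Om r); auto; lra. }
    assert (HuK : supn_le (A l) KB).
    { intros z. pose proof (HAM l Hl z). pose proof (Rmult_le_pos M0 E0 ltac:(lra) ltac:(lra)).
      unfold KB; lra. }
    assert (HvK : supn_le (tau l) KB).
    { intros z. pose proof (Htb l z Hl). pose proof (Hc z). pose proof (Rle_abs (tau0 z)).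
      pose proof (Rmult_le_pos M0 E0 ltac:(lra) ltac:(lra)). pose proof (HAM l Hl z).
      pose proof (Rabs_pos (A l z)).
      rewrite Rabs_pos_eq by lra. unfold KB; lra. }
    assert (HwK : supn2_le (fun y z => A (l - tau l y) z) KB).
    { intros y z. apply Hwb; auto. }
    assert (H0K : supn_le (fun _ : OmT Om => 0) KB).
    { intros z. rewrite Rabs_R0; lra. }
    assert (H02K : supn2_le (fun (_ _ : OmT Om) => 0) KB).
    { intros y z. rewrite Rabs_R0; lra. }
    pose proof (HL (A l) (tau l) (fun y z => A (l - tau l y) z)
                   (fun _ => 0) (fun _ => 0) (fun _ _ => 0)
                   (HAc l ltac:(lra)) Htlc Hw (contO_const n Om 0) (contO_const n Om 0)
                   (contO2_const n Om 0) HuK HvK HwK H0K H0K H02K KB KB KB) as HH.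
    assert (HH' : Rabs (F (A l) (tau l) (fun y z => A (l - tau l y) z) x
                        - F (fun _ => 0) (fun _ => 0) (fun _ _ => 0) x) <= L * (KB + KB + KB)).
    { apply HH.
      - intros z. rewrite Rminus_0_r. apply HuK.
      - intros z. rewrite Rminus_0_r. apply HvK.
      - intros y z. rewrite Rminus_0_r. apply HwK. }
    pose proof (HG0 x). pose proof (Rle_abs G0).
    assert (L * (KB + KB + KB) <= Rabs L * (3 * KB)).
    { replace (KB + KB + KB) with (3 * KB) by ring. apply Rmult_le_compat_r; [lra|apply Rle_abs]. }
    pose proof (Rabs_triang_inv (F (A l) (tau l) (fun y z => A (l - tau l y) z) x)
                                (F (fun _ => 0) (fun _ => 0) (fun _ _ => 0) x)).
    unfold C; lra. }
  assert (HAL : forall s1 s2, 0 <= s1 <= s2 -> s2 <= r -> forall x,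
             Rabs (A s2 x - A s1 x) <= C * (s2 - s1)).
  { intros s1 s2 Hs Hs2 x.
    destruct (HAint s2 ltac:(lra) x) as [pr2 E2].
    destruct (HAint s1 ltac:(lra) x) as [pr1 E1].
    pose (q1 := RiemannInt_P22 pr2 Hs).
    pose (q2 := RiemannInt_P23 pr2 Hs).
    pose proof (RiemannInt_P26 q1 q2 pr2) as E3.
    rewrite (RiemannInt_P5 q1 pr1) in E3.
    assert (HB2 : - C * (s2 - s1) <= RiemannInt q2 <= C * (s2 - s1)).
    { apply RiemannInt_const_bound; [lra|]. intros l Hl.
      pose proof (HFb l x ltac:(lra)) as HH. apply abs_between in HH. lra. }
    apply Rabs_le. lra. }
  assert (Hsup : forall th, th <= 0 -> forall x,
             Rabs (exp (- alpha * Rabs th) * hist A t th x) <= M).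
  { intros th Hth x. unfold hist; cbv beta. destruct (Hpt x) as [Ha1 _].
    rewrite Rabs_mult, (Rabs_pos_eq (exp _)) by (left; apply exp_pos).
    destruct (Rle_lt_dec 0 (t + th)) as [Hs|Hs].
    - pose proof (HAM (t+th) ltac:(lra) x).
      assert (exp (- alpha * Rabs th) <= 1).
      { rewrite <- exp_0. apply exp_mono. pose proof (Rabs_pos th). nra. }
      pose proof (Rabs_pos (A (t+th) x)). pose proof (exp_pos (- alpha * Rabs th)).
      assert (exp (- alpha * Rabs th) * Rabs (A (t + th) x) <= 1 * Rabs (A (t + th) x))
        by (apply Rmult_le_compat_r; lra).
      lra.
    - rewrite HAphi by lra.
      pose proof (Ha_ (t+th) ltac:(lra) x) as H.
      rewrite Rabs_mult, (Rabs_pos_eq (exp _)) in H by (left; apply exp_pos).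
      assert (exp (- alpha * Rabs th) <= exp (- alpha * Rabs (t+th))).
      { apply exp_mono. rewrite (Rabs_left th) by lra. rewrite (Rabs_left (t+th)) by lra. nra. }
      pose proof (Rabs_pos (phi (t+th) x)).
      assert (exp (- alpha * Rabs th) * Rabs (phi (t + th) x)
              <= exp (- alpha * Rabs (t+th)) * Rabs (phi (t + th) x))
        by (apply Rmult_le_compat_r; lra).
      lra. }
  assert (Hlip : forall th1 th2, th1 <= 0 -> th2 <= 0 -> forall x,
    Rabs (exp (- alpha * Rabs th1) * hist A t th1 x - exp (- alpha * Rabs th2) * hist A t th2 x)
      <= Rabs B * Rabs (th1 - th2)).
  { intros th1 th2 H1 H2 x. destruct (Hpt x) as [Ha1 [Hb1 Hc1]].
    set (g := fun s => exp (alpha * s) * A s x).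
    assert (HgA : forall s1 s2, s1 <= s2 <= 0 -> Rabs (g s2 - g s1) <= B * (s2 - s1)).
    { intros s1 s2 Hs. unfold g. rewrite !HAphi by lra.
      pose proof (Hb_ s2 s1 ltac:(lra) ltac:(lra) x) as H.
      rewrite (Rabs_left1 s2), (Rabs_left1 s1) in H by lra.
      replace (- alpha * - s2) with (alpha * s2) in H by ring.
      replace (- alpha * - s1) with (alpha * s1) in H by ring.
      rewrite (Rabs_pos_eq (s2 - s1)) in H by lra.
      eapply Rle_trans; [apply H|]. apply Rmult_le_compat_r; lra. }
    assert (HgB : forall s1 s2, 0 <= s1 <= s2 -> s2 <= t -> Rabs (g s2 - g s1) <= B * (s2 - s1)).
    { intros s1 s2 Hs Hs2. unfold g.
      pose proof (exp_lip alpha s1 s2 Halpha ltac:(lra)) as [Hd1 Hd2].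
      assert (He2 : exp (alpha * s2) <= Er) by (apply exp_mono; apply Rmult_le_compat_l; lra).
      assert (He1 : exp (alpha * s1) <= Er) by (apply exp_mono; apply Rmult_le_compat_l; lra).
      pose proof (exp_pos (alpha * s1)).
      pose proof (HAM s2 ltac:(lra) x) as HA2.
      pose proof (HAL s1 s2 ltac:(lra) ltac:(lra) x) as HA12.
      replace (exp (alpha * s2) * A s2 x - exp (alpha * s1) * A s1 x) with
        ((exp (alpha * s2) - exp (alpha * s1)) * A s2 x + exp (alpha * s1) * (A s2 x - A s1 x)) by ring.
      eapply Rle_trans; [apply Rabs_triang|]. rewrite !Rabs_mult.
      rewrite (Rabs_pos_eq (exp (alpha*s2) - _)) by lra.
      rewrite (Rabs_pos_eq (exp (alpha * s1))) by lra.
      assert (T1 : (exp (alpha * s2) - exp (alpha * s1)) * Rabs (A s2 x) <= alpha * (s2 - s1) * Er * M).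
      { apply Rmult_le_compat; try lra. apply Rabs_pos.
        eapply Rle_trans; [apply Hd2|]. apply Rmult_le_compat_l; [|lra]. apply Rmult_le_pos; lra. }
      assert (T2 : exp (alpha * s1) * Rabs (A s2 x - A s1 x) <= Er * (C * (s2 - s1))).
      { apply Rmult_le_compat; try lra. apply Rabs_pos. }
      assert (B * (s2 - s1) = M0 * (s2 - s1) + alpha * (s2 - s1) * Er * M + Er * (C * (s2 - s1)))
        by (unfold B; ring).
      assert (0 <= M0 * (s2 - s1)) by (apply Rmult_le_pos; lra).
      lra. }
    assert (Hg : forall s1 s2, s1 <= s2 <= t -> Rabs (g s2 - g s1) <= B * (s2 - s1)).
    { intros s1 s2 Hs. destruct (Rle_lt_dec s2 0) as [Hs2|Hs2].
      - apply HgA; lra.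
      - destruct (Rle_lt_dec 0 s1) as [Hs1|Hs1].
        + apply HgB; lra.
        + pose proof (HgA s1 0 ltac:(lra)). pose proof (HgB 0 s2 ltac:(lra) ltac:(lra)).
          replace (g s2 - g s1) with ((g s2 - g 0) + (g 0 - g s1)) by ring.
          eapply Rle_trans; [apply Rabs_triang|]. lra. }
    assert (Hth : forall th, th <= 0 ->
              exp (- alpha * Rabs th) * hist A t th x = exp (- alpha * t) * g (t + th)).
    { intros th Hth. unfold hist, g. rewrite Rabs_left1 by lra.
      rewrite <- Rmult_assoc, <- exp_plus. f_equal. f_equal. ring. }
    rewrite (Hth th1 H1), (Hth th2 H2).
    rewrite <- Rmult_minus_distr_l, Rabs_mult, (Rabs_pos_eq (exp _)) by (left; apply exp_pos).
    assert (exp (- alpha * t) <= 1) by (rewrite <- exp_0; apply exp_mono; nra).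
    rewrite (Rabs_pos_eq B) by lra.
    assert (Hgg : Rabs (g (t + th1) - g (t + th2)) <= B * Rabs (th1 - th2)).
    { destruct (Rle_lt_dec th1 th2).
      - rewrite (Rabs_left1 (th1 - th2)) by lra.
        pose proof (Hg (t+th1) (t+th2) ltac:(lra)) as Hq.
        replace (- (th1 - th2)) with (t + th2 - (t + th1)) by ring.
        rewrite Rabs_minus_sym. exact Hq.
      - rewrite (Rabs_pos_eq (th1 - th2)) by lra.
        pose proof (Hg (t+th2) (t+th1) ltac:(lra)) as Hq.
        replace (th1 - th2) with (t + th1 - (t + th2)) by ring. exact Hq. }
    pose proof (Rabs_pos (g (t + th1) - g (t + th2))). pose proof (exp_pos (- alpha * t)).
    assert (exp (- alpha * t) * Rabs (g (t + th1) - g (t + th2)) <= 1 * Rabs (g (t + th1) - g (t + th2)))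
      by (apply Rmult_le_compat_r; lra).
    lra. }
  split.
  - split; [|split; [|split]].
    + intros th Hth. unfold hist. apply HAc. lra.
    + intros th Hth eps He. destruct (HAp (t + th) ltac:(lra) eps He) as [del [Hdel Hd]].
      exists del; split; auto. intros s Hs Hsd x. unfold hist. apply Hd; [lra|].
      replace (t + s - (t + th)) with (s - th) by ring; auto.
    + exists M. exact Hsup.
    + exists (Rabs B). exact Hlip.
  - exists M, (Rabs B). split; [lra|]. split; [exact Hsup|exact Hlip].
Qed.
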